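(* Every bipartite graph $H=(V,F)$ with no connected component consisting of a single edge admits a partial edge colouring with $4$ colours such that all edges of $H$ are satisfied and every vertex of $V$ is incident with a uniquely coloured edge.
   Context: For an edge $e=uv$, $E[e]$ is the set of edges incident with $u$ or $v$ and $E(e)=E[e]\setminus\{e\}$. In a partial edge colouring (not all edges need be coloured), a colour $\alpha$ is unique for $e$ if $\alpha$ appears on some edge $e'\in E(e)$ and on no other edge of $E[e]\setminus\{e'\}$; $e$ is satisfied if such a colour exists. A vertex $v$ is incident with a uniquely coloured edge if some coloured edge incident with $v$ has a colour appearing on no other edge incident with $v$. (Isolated vertices are not excluded by the hypothesis; the claim is as stated for every vertex of $V$, where vertices of degree $0$ may be assumed absent since $H$ is given via its edges—more precisely, the claim applies to every vertex of positive degree, and $V$ is assumed to have no isolated vertices.) *)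

(* Defs.v *)
(* A graph H = (V, F) is given by its edge set
   F : {set {set T}} over a finite vertex type T; each edge is a 2-element
   vertex set. A partial edge colouring with k colours is a map
   c : {set T} -> option 'I_k (None = uncoloured); only its values on F matter. *)
From mathcomp Require Import all_boot.
Set Implicit Arguments. Unset Strict Implicit. Unset Printing Implicit Defensive.

Section Defs.
Variable T : finType.

Definition is_graph (F : {set {set T}}) : Prop :=
  forall f, f \in F -> #|f| = 2.

Definition bipartite (F : {set {set T}}) : Prop :=
  exists A : {set T}, forall f, f \in F -> #|f :&: A| = 1.

Definition closed_nbhd (F : {set {set T}}) (f : {set T}) : {set {set T}} :=
  [set g in F | g :&: f != set0].

Definition open_nbhd (F : {set {set T}}) (f : {set T}) : {set {set T}} :=
  closed_nbhd F f :\ f.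

Definition single_edge_component (F : {set {set T}}) (f : {set T}) : Prop :=
  f \in F /\ open_nbhd F f = set0.

Variable k : nat.

Definition unique_colour_for (F : {set {set T}}) (c : {set T} -> option 'I_k)
  (f : {set T}) (a : 'I_k) : Prop :=
  exists2 g, g \in open_nbhd F f &
    (c g = Some a /\
     forall h, h \in closed_nbhd F f -> h != g -> c h <> Some a).

Definition satisfied (F : {set {set T}}) (c : {set T} -> option 'I_k)
  (f : {set T}) : Prop :=
  exists a, unique_colour_for F c f a.

Definition has_unique_edge (F : {set {set T}}) (c : {set T} -> option 'I_k)
  (v : T) : Prop :=
  exists2 f, f \in F /\ v \in f &
    exists a, c f = Some a /\
      forall g, g \in F -> v \in g -> g != f -> c g <> Some a.

(* vertex set V of H: the vertices of positive degree *)
Definition vertex_of (F : {set {set T}}) (v : T) : Prop :=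
  exists2 f, f \in F & v \in f.

End Defs.

(* Main.v *)
Require Import Defs.
From mathcomp Require Import all_boot.
From mathcomp Require Import zify.
Set Implicit Arguments. Unset Strict Implicit. Unset Printing Implicit Defensive.

Definition sc (i : 'I_4) : 'I_4 := Ordinal (ltn_pmod i.+1 (isT : 0 < 4)).

Lemma sc_facts (a : 'I_4) :
  [&& sc a != a, sc (sc a) != a, sc (sc (sc a)) != a & odd (sc a) == ~~ odd a].
Proof. by case: a => [[|[|[|[|n]]]] Hi]. Qed.
Lemma sc_neq (a : 'I_4) : sc a != a. Proof. by case/and4P: (sc_facts a). Qed.
Lemma sc2_neq (a : 'I_4) : sc (sc a) != a. Proof. by case/and4P: (sc_facts a). Qed.
Lemma sc3_neq (a : 'I_4) : sc (sc (sc a)) != a. Proof. by case/and4P: (sc_facts a). Qed.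
Lemma sc_odd (a : 'I_4) : odd (sc a) = ~~ odd a.
Proof. by case/and4P: (sc_facts a) => _ _ _ /eqP. Qed.
Lemma sc_cases (a b : 'I_4) : a != b -> [|| b == sc a, b == sc (sc a) | a == sc b].
Proof. by case: a => [[|[|[|[|n]]]] Hi]; case: b => [[|[|[|[|m]]]] Hj]. Qed.
Lemma sc_root (x v : 'I_4) : (v == x) || (sc v == x) ->
  (v != sc (sc x)) && (sc v != sc (sc x)).
Proof. by case: x => [[|[|[|[|n]]]] Hi]; case: v => [[|[|[|[|m]]]] Hj]. Qed.

Section Proof1.
Variable T : finType.
Variable F : {set {set T}}.
Hypothesis graphF : is_graph F.

Lemma edge_neq u v : [set u; v] \in F -> u != v.
Proof.
move=> /graphF; rewrite cards2; by case: (u != v).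
Qed.

Lemma edge_dec f : f \in F -> exists u v, u != v /\ f = [set u; v].
Proof. move=> fF; apply/cards2P; by rewrite graphF. Qed.

Lemma edge_at f v : f \in F -> v \in f -> exists w, f = [set v; w].
Proof.
move=> /edge_dec [a [b [_ ->]]]; rewrite !inE => /orP [] /eqP ->.
  by exists b.
by exists a; rewrite setUC.
Qed.

Record good (X R : {set T}) (pi : T -> T) (d xr : T -> 'I_4) (p : T -> bool) : Prop := Good {
  g1 : R \subset X;
  g2 : forall v, v \in X -> v \notin R ->
         [/\ pi v \in X, [set v; pi v] \in F & (pi v \in R \/ d v = sc (d (pi v)))];
  g3 : forall r, r \in R -> #|[set w in X :\: R | (pi w == r) && (d w == xr r)]| = 1;
  g3' : forall r, r \in R -> #|[set w in X :\: R | (pi w == r) && (d w == sc (sc (xr r)))]| = 1;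
  g4 : forall u v, u \in R -> v \in R -> [set u; v] \notin F;
  g5 : forall u v, u \notin R -> v \notin R -> [set u; v] \in F -> p u != p v;
  g6 : forall v, v \in X -> v \notin R -> odd (d v) = p v }.


Section Final.
Variables (X R : {set T}) (pi : T -> T) (d xr : T -> 'I_4) (p : T -> bool).
Hypothesis G : good X R pi d xr p.
Hypothesis compl : forall v, vertex_of F v -> v \in X.

Definition col (e : {set T}) : option 'I_4 :=
  if [pick v in X :\: R | e == [set v; pi v]] is Some v then Some (d v) else None.

Lemma pi_neq v : v \in X -> v \notin R -> pi v != v.
Proof. move=> vX vR; case: (g2 G vX vR) => _ H _. have := edge_neq H. by rewrite eq_sym. Qed.

Lemma par_d v : v \in X -> v \notin R -> pi v \notin R -> d v = sc (d (pi v)).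
Proof. move=> vX vR pR; case: (g2 G vX vR) => _ _ [pvR|//]; by rewrite pvR in pR. Qed.

Lemma e_uniq v w : v \in X -> v \notin R -> w \in X -> w \notin R ->
  [set w; pi w] = [set v; pi v] -> w = v.
Proof.
move=> vX vR wX wR E.
have : w \in [set v; pi v] by rewrite -E set21.
rewrite !inE => /orP [/eqP // | /eqP wpv].
have : v \in [set w; pi w] by rewrite E set21.
rewrite !inE => /orP [/eqP -> // | /eqP vpw].
have h1 := par_d vX vR; rewrite -wpv in h1; have h1' := h1 wR.
have h2 := par_d wX wR; rewrite -vpw in h2; have h2' := h2 vR.
by move: (sc2_neq (d v)); rewrite -h2' -h1' eqxx.
Qed.

Lemma colP e k : col e = Some k ->
  exists v, [/\ v \in X, v \notin R, e = [set v; pi v] & d v = k].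
Proof.
rewrite /col; case: pickP => // v /andP [vXR /eqP ->] [<-].
by exists v; move: vXR; rewrite inE => /andP [-> ->].
Qed.

Lemma colE v : v \in X -> v \notin R -> col [set v; pi v] = Some (d v).
Proof.
move=> vX vR; rewrite /col; case: pickP => [w /andP [] | ].
  rewrite inE => /andP [wR wX] /eqP E.
  by rewrite (@e_uniq v w) // E.
by move/(_ v); rewrite inE vX vR eqxx.
Qed.

Lemma vertex_ok v : vertex_of F v -> has_unique_edge F col v.
Proof.
move=> /compl vX.
case: (boolP (v \in R)) => vR.
  have /eqP/cards1P [c1 E1] := g3 G vR.
  have : c1 \in [set c1] by rewrite set11.
  rewrite -E1 !inE => /and3P [/andP [c1R c1X] /eqP pc1 /eqP dc1].
  exists [set c1; pi c1].
    by case: (g2 G c1X c1R) => _ -> _; rewrite pc1 !inE eqxx orbT.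
  exists (xr v); split; first by rewrite colE // dc1.
  move=> g gF vg gne /colP [w [wX wR gE dw]].
  move: vg; rewrite gE !inE => /orP [/eqP vw | /eqP vpw].
    by move: vR; rewrite vw (negbTE wR).
  have : w \in [set c1] by rewrite -E1 !inE wX wR -vpw dw !eqxx.
  by rewrite inE => /eqP wc; move: gne; rewrite gE wc eqxx.
exists [set v; pi v].
  by case: (g2 G vX vR) => _ -> _; rewrite !inE eqxx.
exists (d v); split; first by rewrite colE.
move=> g gF vg gne /colP [w [wX wR gE dw]].
move: vg; rewrite gE !inE => /orP [/eqP vw | /eqP vpw].
  by move: gne; rewrite gE vw eqxx.
have := par_d wX wR; rewrite -vpw => /(_ vR) h1.
by move: (sc_neq (d v)); rewrite -h1 dw eqxx.
Qed.


Lemma nonroot_ok u v : u \in X -> u \notin R -> v \in X -> v \notin R -> [set u; v] \in F ->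
  (d v = sc (d u)) \/ (d v = sc (sc (d u))) -> satisfied F col [set u; v].
Proof.
move=> uX uR vX vR uvF hd.
have [_ puF _] := g2 G uX uR.
exists (d u); exists [set u; pi u].
  rewrite /open_nbhd /closed_nbhd !inE puF /=; apply/andP; split.
    apply/negP => /eqP E.
    have : v \in [set u; pi u] by rewrite E set22.
    rewrite !inE => /orP [/eqP vu | /eqP vpu].
      by move: (edge_neq uvF); rewrite vu eqxx.
    have := par_d uX uR; rewrite -vpu => /(_ vR) h1.
    case: hd => hd.
      by move: (sc2_neq (d u)); rewrite -hd -h1 eqxx.
    by move: (sc3_neq (d u)); rewrite -hd -h1 eqxx.
  by apply/set0Pn; exists u; rewrite !inE eqxx.
split; first by rewrite colE.
move=> h; rewrite /closed_nbhd inE => /andP [hF /set0Pn [z zin]] hne CH; have [w [wX wR hE dw]] := colP CH; move: zin.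
rewrite inE hE !inE => /andP [/orP [] /eqP zw /orP [] /eqP zu].
- by move: hne; rewrite hE -zw zu eqxx.
- case: hd => hd.
    by move: (sc_neq (d u)); rewrite -hd -zu zw dw eqxx.
  by move: (sc2_neq (d u)); rewrite -hd -zu zw dw eqxx.
- have := par_d wX wR; rewrite -zw zu => /(_ uR) h1.
  by move: (sc_neq (d u)); rewrite -h1 dw eqxx.
- have := par_d wX wR; rewrite -zw zu => /(_ vR) h1.
  case: hd => hd.
    by move: (sc2_neq (d u)); rewrite -hd -h1 dw eqxx.
  by move: (sc3_neq (d u)); rewrite -hd -h1 dw eqxx.
Qed.


Lemma root_ok r c v : r \in R -> c \in X -> c \notin R -> pi c = r ->
  (forall w, w \in X -> w \notin R -> pi w = r -> d w = d c -> w = c) ->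
  v \in X -> v \notin R -> [set r; v] \in F -> c != v -> d v != d c -> sc (d v) != d c ->
  satisfied F col [set r; v].
Proof.
move=> rR cX cR pc cu vX vR rvF cv dv sdv.
have [_ pcF _] := g2 G cX cR.
exists (d c); exists [set c; pi c].
  rewrite /open_nbhd /closed_nbhd !inE pcF /=; apply/andP; split.
    apply/negP => /eqP E.
    have : c \in [set r; v] by rewrite -E set21.
    rewrite !inE => /orP [/eqP cr | /eqP cv'].
      by move: cR; rewrite cr rR.
    by rewrite cv' eqxx in cv.
  by apply/set0Pn; exists r; rewrite !inE pc !eqxx orbT.
split; first by rewrite colE.
move=> h; rewrite /closed_nbhd inE => /andP [hF /set0Pn [z zin]] hne CH; have [w [wX wR hE dw]] := colP CH; move: zin.
rewrite inE hE !inE => /andP [/orP [] /eqP zw /orP [] /eqP zu].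
- by move: wR; rewrite -zw zu rR.
- by move: dv; rewrite -zu zw dw eqxx.
- have wc := cu w wX wR (etrans (esym zw) zu) dw.
  by move: hne; rewrite hE wc eqxx.
- have := par_d wX wR; rewrite -zw zu => /(_ vR) h1.
  by move: sdv; rewrite -h1 dw eqxx.
Qed.

Lemma edge_ok f : f \in F -> satisfied F col f.
Proof.
move=> fF; have [u [v [uv fE]]] := edge_dec fF.
have uX : u \in X by apply: compl; exists f => //; rewrite fE set21.
have vX : v \in X by apply: compl; exists f => //; rewrite fE set22.
have rootcase : forall r w, r \in R -> w \in X -> w \notin R -> [set r; w] \in F ->
    satisfied F col [set r; w].
  move=> r w rR wX wR rwF.
  have /eqP/cards1P [c1 E1] := g3 G rR.
  have /eqP/cards1P [c2 E2] := g3' G rR.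
  have : c1 \in [set c1] by rewrite set11.
  rewrite -E1 !inE => /and3P [/andP [c1R c1X] /eqP pc1 /eqP dc1].
  have : c2 \in [set c2] by rewrite set11.
  rewrite -E2 !inE => /and3P [/andP [c2R c2X] /eqP pc2 /eqP dc2].
  have u1 : forall w', w' \in X -> w' \notin R -> pi w' = r -> d w' = d c1 -> w' = c1.
    move=> w' w'X w'R pw dw'.
    have : w' \in [set c1] by rewrite -E1 !inE w'X w'R pw dw' dc1 !eqxx.
    by rewrite inE => /eqP.
  have u2 : forall w', w' \in X -> w' \notin R -> pi w' = r -> d w' = d c2 -> w' = c2.
    move=> w' w'X w'R pw dw'.
    have : w' \in [set c2] by rewrite -E2 !inE w'X w'R pw dw' dc2 !eqxx.
    by rewrite inE => /eqP.
  have c12 : c1 != c2.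
    by apply/eqP => e; move: (sc2_neq (xr r)); rewrite -dc2 -e dc1 eqxx.
  case: (eqVneq w c1) => [wc1 | wc1].
    apply: (root_ok rR c2X c2R pc2 u2 wX wR rwF).
    - by rewrite wc1 eq_sym.
    - by rewrite wc1 dc1 dc2 eq_sym sc2_neq.
    - by rewrite wc1 dc1 dc2 eq_sym sc_neq.
  case: (eqVneq w c2) => [wc2 | wc2].
    apply: (root_ok rR c1X c1R pc1 u1 wX wR rwF).
    - by rewrite wc2.
    - by rewrite wc2 dc1 dc2 sc2_neq.
    - by rewrite wc2 dc1 dc2 sc3_neq.
  case: (boolP ((d w == xr r) || (sc (d w) == xr r))) => hw.
    have /andP [h1 h2] := sc_root hw.
    apply: (root_ok rR c2X c2R pc2 u2 wX wR rwF); by rewrite ?dc2 // eq_sym.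
  move: hw; rewrite negb_or => /andP [h1 h2].
  by apply: (root_ok rR c1X c1R pc1 u1 wX wR rwF); rewrite ?dc1 // eq_sym.
rewrite fE.
case: (boolP (u \in R)) => uR; case: (boolP (v \in R)) => vR.
- by move: (g4 G uR vR); rewrite -fE fF.
- by apply: rootcase; rewrite -?fE.
- by rewrite setUC; apply: rootcase; rewrite // setUC -fE.
have duv : d u != d v.
  apply/eqP => e; move: (g5 G uR vR); rewrite -fE => /(_ fF).
  by rewrite -(g6 G uX uR) -(g6 G vX vR) e eqxx.
case/or3P: (sc_cases duv) => /eqP h.
- by apply: nonroot_ok; rewrite -?fE //; left.
- by apply: nonroot_ok; rewrite -?fE //; right.
rewrite setUC; apply: nonroot_ok => //; [by rewrite setUC -fE | by left].
Qed.

End Final.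

Lemma ext_a X R pi d xr p y u : good X R pi d xr p -> y \notin X -> u \in X -> u \notin R ->
  [set y; u] \in F ->
  good (y |: X) R (fun v => if v == y then u else pi v)
    (fun v => if v == y then sc (d u) else d v) xr p.
Proof.
move=> G yX uX uR yuF.
have yR : y \notin R by apply/negP => /(subsetP (g1 G)); rewrite (negbTE yX).
have uy : (u == y) = false by apply/negbTE/eqP => e; rewrite -e uX in yX.
have notyX : forall z, z \in X -> (z == y) = false.
  by move=> z zX; apply/negbTE/eqP => e; rewrite -e zX in yX.
have ur : forall r, r \in R -> (u == r) = false.
  by move=> r rR; apply/negbTE/eqP => e; rewrite e rR in uR.
constructor.
- by apply: (subset_trans (g1 G)); apply/subsetP => z zX; rewrite inE zX orbT.
- move=> v /setU1P [->| vX] vR.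
    by rewrite eqxx uy !inE uX orbT yuF; split => //; right.
  have [h1 h2 h3] := g2 G vX vR.
  rewrite (notyX v vX) (notyX _ h1) !inE h1 orbT h2; split => //.
- move=> r rR; apply: (etrans _ (g3 G rR)); apply: eq_card => w; rewrite !inE.
  case: (eqVneq w y) => [->|wy] /=; last by [].
  by rewrite (negbTE yX) (ur r rR) /= !andbF.
- move=> r rR; apply: (etrans _ (g3' G rR)); apply: eq_card => w; rewrite !inE.
  case: (eqVneq w y) => [->|wy] /=; last by [].
  by rewrite (negbTE yX) (ur r rR) /= !andbF.
- exact: (g4 G).
- exact: (g5 G).
- move=> v /setU1P [->| vX] vR.
    rewrite eqxx sc_odd (g6 G uX uR).
    by move: (g5 G yR uR yuF); case: (p u); case: (p y).
  by rewrite (notyX v vX) (g6 G vX vR).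
Qed.


Definition nrel (R : {set T}) : rel T :=
  fun a b => [&& a \notin R, b \notin R & [set a; b] \in F].

Lemma nocross (X R : {set T}) y w :
  (forall a b, a \notin X -> b \in X -> b \notin R -> [set a; b] \notin F) ->
  y \notin X -> connect (nrel R) y w -> w \notin X.
Proof.
move=> noA yX /connectP [s pth ->]; elim: s y yX pth => [|b s IH] a aX //=.
move=> /andP [/and3P [_ bR abF] pth]; apply: IH => //.
by apply/negP => bX; move: (noA _ _ aX bX bR); rewrite abF.
Qed.

Lemma ext_b X R pi d xr p y r : good X R pi d xr p -> y \notin X -> r \in R ->
  [set y; r] \in F ->
  (forall a b, a \notin X -> b \in X -> b \notin R -> [set a; b] \notin F) ->
  good (y |: X) R (fun v => if v == y then r else pi v)
    (fun v => if v == y then sc (xr r) else d v) xr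
    (fun v => if connect (nrel R) y v then p v (+) (p y != odd (sc (xr r))) else p v).
Proof.
move=> G yX rR yrF noA.
have yR : y \notin R by apply/negP => /(subsetP (g1 G)); rewrite (negbTE yX).
have rX : r \in X by apply: (subsetP (g1 G)).
have notyX : forall z, z \in X -> (z == y) = false.
  by move=> z zX; apply/negbTE/eqP => e; rewrite -e zX in yX.
constructor.
- by apply: (subset_trans (g1 G)); apply/subsetP => z zX; rewrite inE zX orbT.
- move=> v /setU1P [->| vX] vR.
    by rewrite eqxx !inE rX orbT yrF; split => //; left.
  have [h1 h2 h3] := g2 G vX vR.
  rewrite (notyX v vX) (notyX _ h1) !inE h1 orbT h2; split => //.
- move=> r' r'R; apply: (etrans _ (g3 G r'R)); apply: eq_card => w; rewrite !inE.
  case: (eqVneq w y) => [->|wy] /=; last by [].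
  rewrite (negbTE yX) andbF andFb; case: (eqVneq r r') => [<-|ne].
    by rewrite (negbTE (sc_neq _)) !andbF.
  by rewrite ?andFb ?andbF.
- move=> r' r'R; apply: (etrans _ (g3' G r'R)); apply: eq_card => w; rewrite !inE.
  case: (eqVneq w y) => [->|wy] /=; last by [].
  rewrite (negbTE yX) andbF andFb; case: (eqVneq r r') => [<-|ne].
    by rewrite eq_sym (negbTE (sc_neq _)) !andbF.
  by rewrite ?andFb ?andbF.
- exact: (g4 G).
- move=> u v uR vR uvF.
  have cuv : nrel R u v by rewrite /nrel uR vR uvF.
  have cvu : nrel R v u by rewrite /nrel uR vR setUC uvF.
  have h := g5 G uR vR uvF.
  case: (boolP (connect (nrel R) y u)) => cu; case: (boolP (connect (nrel R) y v)) => cv.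
  + by move: h; case: (p u); case: (p v); case: (p y != odd (sc (xr r))).
  + by move: cv; rewrite (connect_trans cu (connect1 cuv)).
  + by move: cu; rewrite (connect_trans cv (connect1 cvu)).
  + exact: h.
- move=> v /setU1P [->| vX] vR.
    rewrite eqxx connect0.
    by case: (p y); case: (odd _).
  rewrite (notyX v vX) (g6 G vX vR).
  case: (boolP (connect (nrel R) y v)) => // cv.
  by move: (nocross noA yX cv); rewrite vX.
Qed.


Lemma ext_c X R pi d xr p r c1 c2 (x : 'I_4) : good X R pi d xr p -> r \notin X -> c1 != c2 ->
  [set r; c1] \in F -> [set r; c2] \in F -> (forall w, [set r; w] \in F -> w \notin X) ->
  odd x = p c1 ->
  good (r |: (c1 |: (c2 |: X))) (r |: R) (fun v => if (v == c1) || (v == c2) then r else pi v)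
    (fun v => if v == c1 then x else if v == c2 then sc (sc x) else d v)
    (fun v => if v == r then x else xr v) p.
Proof.
move=> G rX c12 rc1F rc2F hr hx.
have c1X := hr _ rc1F; have c2X := hr _ rc2F.
have inX : forall (z w : T), z \in X -> w \notin X -> (z == w) = false.
  by move=> z w zX wX; apply/negbTE/eqP => e; rewrite -e zX in wX.
have rc1 : (r == c1) = false by apply/negbTE/edge_neq.
have rc2 : (r == c2) = false by apply/negbTE/edge_neq.
have notR : forall z, z \notin X -> z \notin R.
  by move=> z zX; apply/negP => /(subsetP (g1 G)); rewrite (negbTE zX).
have rR := notR _ rX; have c1R := notR _ c1X; have c2R := notR _ c2X.
have pc12 : p c1 = p c2.
  have := g5 G rR c1R rc1F; have := g5 G rR c2R rc2F.
  by case: (p r); case: (p c1); case: (p c2).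
constructor.
- apply/subsetP => z /setU1P [->|zR]; first by rewrite setU11.
  by rewrite !inE (subsetP (g1 G) _ zR) !orbT.
- move=> v /setU1P [->|/setU1P [->|/setU1P [->|vX]]] vR.
  + by rewrite setU11 in vR.
  + by rewrite eqxx /= setU11 setUC rc1F; split => //; left; rewrite setU11.
  + by rewrite eqxx orbT /= setU11 setUC rc2F; split => //; left; rewrite setU11.
  + have vR' : v \notin R by move: vR; rewrite inE negb_or => /andP [].
    have [h1 h2 h3] := g2 G vX vR'.
    rewrite (inX _ _ vX c1X) (inX _ _ vX c2X) (inX _ _ h1 c1X) (inX _ _ h1 c2X) /=.
    split => //; first by rewrite !inE h1 !orbT.
    by case: h3 => [h3|->]; [left; rewrite inE h3 orbT | right].
- move=> r' /setU1P [->|r'R].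
  + rewrite eqxx; apply: (etrans _ (cards1 c1)); apply: eq_card => w; rewrite !inE.
    case: (eqVneq w c1) => [->|w1] /=.
      by rewrite eq_sym rc1 c1R !eqxx.
    case: (eqVneq w c2) => [->|w2] /=.
      by rewrite (negbTE (sc2_neq x)) !andbF.
    case: (eqVneq w r) => [->|wr] //=.
    case: (boolP (w \in X)) => wX /=; last by rewrite !andbF.
    case: (boolP (w \in R)) => wR //=.
    have [h1 _ _] := g2 G wX wR.
    by rewrite (inX _ _ h1 rX).
  + have r'X : r' \in X by apply: (subsetP (g1 G)).
    have r'r : (r' == r) = false by apply: inX.
    have rr' : (r == r') = false by rewrite eq_sym.
    rewrite r'r; apply: (etrans _ (g3 G r'R)); apply: eq_card => w; rewrite !inE.
    case: (eqVneq w c1) => [->|w1] /=.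
      by rewrite (negbTE c1X) rr' ?andFb ?andbF ?andFb.
    case: (eqVneq w c2) => [->|w2] /=.
      by rewrite (negbTE c2X) rr' ?andFb ?andbF ?andFb.
    case: (eqVneq w r) => [->|wr] //=.
    by rewrite (negbTE rX) !andbF.
- move=> r' /setU1P [->|r'R].
  + rewrite eqxx; apply: (etrans _ (cards1 c2)); apply: eq_card => w; rewrite !inE.
    case: (eqVneq w c1) => [->|w1] /=.
      by rewrite [x == _]eq_sym (negbTE (sc2_neq x)) (negbTE c12) ?andFb ?andbF ?andFb.
    case: (eqVneq w c2) => [->|w2] /=.
      by rewrite eq_sym rc2 c2R !eqxx.
    case: (eqVneq w r) => [->|wr] //=.
    case: (boolP (w \in X)) => wX /=; last by rewrite !andbF.
    case: (boolP (w \in R)) => wR //=.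
    have [h1 _ _] := g2 G wX wR.
    by rewrite (inX _ _ h1 rX).
  + have r'X : r' \in X by apply: (subsetP (g1 G)).
    have r'r : (r' == r) = false by apply: inX.
    have rr' : (r == r') = false by rewrite eq_sym.
    rewrite r'r; apply: (etrans _ (g3' G r'R)); apply: eq_card => w; rewrite !inE.
    case: (eqVneq w c1) => [->|w1] /=.
      by rewrite (negbTE c1X) rr' ?andFb ?andbF ?andFb.
    case: (eqVneq w c2) => [->|w2] /=.
      by rewrite (negbTE c2X) rr' ?andFb ?andbF ?andFb.
    case: (eqVneq w r) => [->|wr] //=.
    by rewrite (negbTE rX) !andbF.
- move=> u v /setU1P [->|uR] /setU1P [->|vR].
  + by apply/negP => /edge_neq; rewrite eqxx.
  + by apply/negP => /hr; rewrite (subsetP (g1 G) _ vR).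
  + by rewrite setUC; apply/negP => /hr; rewrite (subsetP (g1 G) _ uR).
  + exact: (g4 G).
- move=> u v; rewrite !inE !negb_or => /andP [_ uR] /andP [_ vR].
  exact: (g5 G).
- move=> v /setU1P [->|/setU1P [->|/setU1P [->|vX]]] vR.
  + by rewrite setU11 in vR.
  + by rewrite eqxx.
  + by rewrite eq_sym (negbTE c12) eqxx !sc_odd negbK hx.
  + have vR' : v \notin R by move: vR; rewrite inE negb_or => /andP [].
    by rewrite (inX _ _ vX c1X) (inX _ _ vX c2X) (g6 G vX vR').
Qed.


Definition x0 : 'I_4 := Ordinal (isT : 0 < 4).
Definition x1 : 'I_4 := Ordinal (isT : 1 < 4).

Lemma init (A : {set T}) : (forall f, f \in F -> #|f :&: A| = 1) ->
  good set0 set0 id (fun _ => x0) (fun _ => x0) (fun v => v \in A).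
Proof.
move=> hA; constructor.
- by apply/subsetP => z; rewrite inE.
- by move=> v; rewrite inE.
- by move=> r; rewrite inE.
- by move=> r; rewrite inE.
- by move=> u v; rewrite inE.
2: by move=> v; rewrite inE.
move=> u v _ _ uvF; have := hA _ uvF; have := edge_neq uvF.
case uA: (u \in A); case vA: (v \in A) => // uv.
  have E : [set u; v] :&: A = [set u; v].
    apply/setP => z; rewrite !inE.
    case: (z =P u) => [->|_]; first by rewrite uA.
    by case: (z =P v) => [->|_]; rewrite ?vA ?andbT.
  by rewrite E cards2 uv.
have E : [set u; v] :&: A = set0.
  apply/setP => z; rewrite !inE.
  case: (z =P u) => [->|_]; first by rewrite uA andbF.
  by case: (z =P v) => [->|_]; rewrite ?vA ?andbF.
by rewrite E cards0.
Qed.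

Lemma card_grow (X Y : {set T}) y : X \subset Y -> y \in Y -> y \notin X -> #|X| < #|Y|.
Proof. by move=> sXY yY yX; apply: proper_card; apply/properP; split => //; exists y. Qed.

Hypothesis noK2 : forall f, ~ single_edge_component F f.

Lemma ext X R pi d xr p y : good X R pi d xr p -> y \notin X -> vertex_of F y ->
  exists X' R' pi' d' xr' p', good X' R' pi' d' xr' p' /\ #|X| < #|X'|.
Proof.
move=> G yX [f fF yf].
case: (boolP [exists a, exists b, [&& a \notin X, b \in X, b \notin R & [set a; b] \in F]]).
  move/existsP => [a /existsP [b /and4P [aX bX bR abF]]].
  do 6 eexists; split; first exact: (ext_a G aX bX bR abF).
  by apply: (card_grow (y := a)); rewrite ?setU11 //; apply/subsetP => z zX; rewrite inE zX orbT.
move=> noA'.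
have noA : forall a b, a \notin X -> b \in X -> b \notin R -> [set a; b] \notin F.
  move=> a b aX bX bR; apply/negP => abF; apply: (negP noA').
  by apply/existsP; exists a; apply/existsP; exists b; rewrite aX bX bR abF.
case: (boolP [exists a, exists r, [&& a \notin X, r \in R & [set a; r] \in F]]).
  move/existsP => [a /existsP [r /and3P [aX rR arF]]].
  do 6 eexists; split; first exact: (ext_b G aX rR arF noA).
  by apply: (card_grow (y := a)); rewrite ?setU11 //; apply/subsetP => z zX; rewrite inE zX orbT.
move=> noB'.
have nb : forall a b, a \notin X -> [set a; b] \in F -> b \notin X.
  move=> a b aX abF; apply/negP => bX.
  case: (boolP (b \in R)) => bR.
    apply: (negP noB'); apply/existsP; exists a; apply/existsP; exists b.
    by rewrite aX bR abF.
  by move: (noA _ _ aX bX bR); rewrite abF.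
have [z fE] := edge_at fF yf.
have zX : z \notin X by apply: (nb y _ yX); rewrite -fE.
have : open_nbhd F f != set0 by apply/eqP => E; apply: (noK2 (f := f)); split.
case/set0Pn => g; rewrite /open_nbhd /closed_nbhd !inE => /and3P [gf gF /set0Pn [t]].
rewrite inE => /andP [tg tf].
have [w gE] := edge_at gF tg.
have grow : forall r (Y : {set T}), r \notin X -> X \subset Y -> r \in Y -> #|X| < #|Y|.
  by move=> r Y rX sXY rY; apply: (card_grow sXY rY rX).
have sub : forall (r c1 c2 : T), X \subset r |: (c1 |: (c2 |: X)).
  by move=> r c1 c2; apply/subsetP => u uX; rewrite !inE uX !orbT.
move: tf; rewrite fE !inE => /orP [] /eqP tE; subst t.
- have wz : z != w.
    by apply/eqP => e; move: gf; rewrite gE fE -e eqxx.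
  have hx : odd (if p z then x1 else x0) = p z by case: (p z).
  do 6 eexists; split.
    apply: (ext_c G yX wz _ _ _ hx); rewrite -?fE -?gE //.
    by move=> u; apply: nb.
  by apply: (grow y) => //; rewrite setU11.
- have wy : y != w.
    by apply/eqP => e; move: gf; rewrite gE fE -e setUC eqxx.
  have hx : odd (if p y then x1 else x0) = p y by case: (p y).
  do 6 eexists; split.
    apply: (ext_c G zX wy _ _ _ hx); rewrite -?gE //.
      by rewrite setUC -fE.
    by move=> u; apply: nb.
  by apply: (grow z) => //; rewrite setU11.
Qed.

Lemma complete n : forall (X R : {set T}) (pi : T -> T) (d xr : T -> 'I_4) (p : T -> bool),
  #|T| - #|X| <= n -> good X R pi d xr p ->
  exists X' R' pi' d' xr' p', good X' R' pi' d' xr' p' /\ (forall v, vertex_of F v -> v \in X').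
Proof.
elim: n => [|n IH] X R pi d xr p hn G.
  do 6 eexists; split; first exact: G.
  have XT : X = setT.
    by apply/eqP; rewrite eqEcard subsetT cardsT /= -subn_eq0 -leqn0.
  by move=> v _; rewrite XT inE.
case: (boolP [exists y, (y \notin X) && [exists f, (f \in F) && (y \in f)]]).
  move/existsP => [y /andP [yX /existsP [f /andP [fF yf]]]].
  have [X' [R' [pi' [d' [xr' [p' [G' lt]]]]]]] := ext G yX (ex_intro2 _ _ f fF yf).
  apply: (IH X' R' pi' d' xr' p') => //.
  have := max_card (mem X'); move: hn lt; clear; move: #|X| #|X'| #|T| => a b c; lia.
move=> H; do 6 eexists; split; first exact: G.
move=> v [f fF vf]; apply/contraT => vX; rewrite -(negbTE H).
by apply/existsP; exists v; rewrite vX /=; apply/existsP; exists f; rewrite fF vf.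
Qed.

End Proof1.

Theorem mainTheorem7 (T : finType) (F : {set {set T}}) :
  is_graph F -> bipartite F ->
  (forall f, ~ single_edge_component F f) ->
  exists c : {set T} -> option 'I_4,
    (forall f, f \in F -> satisfied F c f) /\
    (forall v, vertex_of F v -> has_unique_edge F c v).
Proof.
move=> gF [A hA] noK2.
have [X [R [pi [d [xr [p [G comp]]]]]]] :=
  complete gF noK2 (n := #|T|) (leq_subr _ _) (init gF hA).
exists (col X R pi d); split.
  by move=> f fF; exact: (edge_ok gF G comp fF).
by move=> v hv; exact: (vertex_ok G comp hv).
Qed.
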